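(* Let $N=N_T+N_I+N_R$ and let $\mathbf{Z}\in\mathbb{C}^{N\times N}$ be invertible, partitioned into blocks indexed by $T,I,R$ of sizes $N_T,N_I,N_R$. Let $\mathbf{Z}_T\in\mathbb{C}^{N_T\times N_T}$ and $\mathbf{Z}_R\in\mathbb{C}^{N_R\times N_R}$ be invertible diagonal matrices and $\mathbf{Z}_I\in\mathbb{C}^{N_I\times N_I}$ invertible, and set $\mathbf{Z}_0=\mathrm{blkdiag}(\mathbf{Z}_T,\mathbf{Z}_I,\mathbf{Z}_R)$. Let $\mathbf{Y}=\mathbf{Z}^{-1}$ (partitioned in the same way into blocks $\mathbf{Y}_{ab}$), $\mathbf{Y}_T=\mathbf{Z}_T^{-1}$, $\mathbf{Y}_I=\mathbf{Z}_I^{-1}$, $\mathbf{Y}_R=\mathbf{Z}_R^{-1}$. Assume $\mathbf{I}+\mathbf{Z}_0\mathbf{Z}^{-1}$ is invertible and that the matrices $\mathbf{Y}_R+\mathbf{Y}_{RR}$ and $\begin{bmatrix}\mathbf{Y}_I+\mathbf{Y}_{II}&\mathbf{Y}_{IR}\\ \mathbf{Y}_{RI}&\mathbf{Y}_R+\mathbf{Y}_{RR}\end{bmatrix}$ are invertible. Let $\widetilde{\mathbf{Z}}=(\mathbf{I}+\mathbf{Z}_0\mathbf{Z}^{-1})^{-1}$ with blocks $\widetilde{\mathbf{Z}}_{ab}$. Then $\widetilde{\mathbf{Z}}_{TT}$ is invertible and $$\widetilde{\mathbf{Z}}_{RT}\widetilde{\mathbf{Z}}_{TT}^{-1}=\left(\mathbf{Y}_R+\mathbf{Y}_{RR}\right)^{-1}\Big(-\mathbf{Y}_{RT}+\mathbf{Y}_{RI}\big(\mathbf{Y}_I+\mathbf{Y}_{II}-\mathbf{Y}_{IR}(\mathbf{Y}_R+\mathbf{Y}_{RR})^{-1}\mathbf{Y}_{RI}\big)^{-1}\big(\mathbf{Y}_{IT}-\mathbf{Y}_{IR}(\mathbf{Y}_R+\mathbf{Y}_{RR})^{-1}\mathbf{Y}_{RT}\big)\Big),$$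 where the inner inverse exists.
   Context: Blocks are indexed by $T$ (first $N_T$ indices), $I$ (next $N_I$), $R$ (last $N_R$); $\mathbf{X}_{ab}$ denotes the $(a,b)$ block of a matrix $\mathbf{X}$. $\widetilde{\mathbf{Z}}_{RT}\widetilde{\mathbf{Z}}_{TT}^{-1}$ is the general physics-consistent RIS-aided MIMO channel matrix (mapping transmit to receive voltages) in multiport network theory. *)

(* Defs.v *)
From HB Require Import structures.
From mathcomp Require Import all_boot all_order all_algebra.
From mathcomp Require Import complex.
From mathcomp Require Import reals.
Set Implicit Arguments. Unset Strict Implicit. Unset Printing Implicit Defensive.
Import Order.TTheory GRing.Theory Num.Theory.
Local Open Scope ring_scope.

(* Indices of an N x N matrix with N = NT + NI + NR, blocks T, I, R in order. *)
Definition idxT (NT NI NR : nat) (i : 'I_NT) : 'I_(NT + NI + NR) :=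
  lshift NR (lshift NI i).
Definition idxI (NT NI NR : nat) (i : 'I_NI) : 'I_(NT + NI + NR) :=
  lshift NR (rshift NT i).
Definition idxR (NT NI NR : nat) (i : 'I_NR) : 'I_(NT + NI + NR) :=
  rshift (NT + NI) i.

Definition blk {C : Type} {N ma mb : nat} (fa : 'I_ma -> 'I_N) (fb : 'I_mb -> 'I_N)
  (X : 'M[C]_N) : 'M[C]_(ma, mb) := mxsub fa fb X.

Definition blkdiag3 {C : pzRingType} {NT NI NR : nat}
  (A : 'M[C]_NT) (B : 'M[C]_NI) (D : 'M[C]_NR) : 'M[C]_(NT + NI + NR) :=
  block_mx (block_mx A 0 0 B) 0 0 D.

(* Main.v *)
Require Import Defs.
From HB Require Import structures.
From mathcomp Require Import all_boot all_order all_algebra.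
From mathcomp Require Import complex.
From mathcomp Require Import reals.
Import Order.TTheory GRing.Theory Num.Theory.
Local Open Scope ring_scope.
Section H.
Variable C : comUnitRingType.
Variables NT NI NR : nat.
Local Notation T := (@idxT NT NI NR).
Local Notation I := (@idxI NT NI NR).
Local Notation Rr := (@idxR NT NI NR).
Local Notation N := (NT + NI + NR).

Lemma blkM ma mc (fa : 'I_ma -> 'I_N) (fc : 'I_mc -> 'I_N) (X Y : 'M[C]_N) :
  blk fa fc (X *m Y) = blk fa T X *m blk T fc Y + blk fa I X *m blk I fc Y
                       + blk fa Rr X *m blk Rr fc Y.
Proof.
apply/matrixP=> i j; rewrite /blk !mxE big_split_ord big_split_ord /=.
by congr (_ + _ + _); apply: eq_bigr => k _; rewrite !mxE.
Qed.

Lemma blkD ma mc (fa : 'I_ma -> 'I_N) (fc : 'I_mc -> 'I_N) (X Y : 'M[C]_N) :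
  blk fa fc (X + Y) = blk fa fc X + blk fa fc Y.
Proof. by apply/matrixP=> i j; rewrite /blk !mxE. Qed.

Variables (a : 'M[C]_NT) (b : 'M[C]_NI) (d : 'M[C]_NR).
Let B := blkdiag3 a b d.
Lemma bTT : blk T T B = a.
Proof. apply/matrixP=> i j; rewrite /blk /B /blkdiag3 mxE /idxT /idxI /idxR /=. rewrite ?block_mxEul ?block_mxEur ?block_mxEdl ?block_mxEdr. by rewrite ?mxE. Qed.
Lemma bIT : blk I T B = 0.
Proof. apply/matrixP=> i j; rewrite /blk /B /blkdiag3 mxE /idxT /idxI /idxR /=. rewrite ?block_mxEul ?block_mxEur ?block_mxEdl ?block_mxEdr. by rewrite ?mxE. Qed.
Lemma bRT : blk Rr T B = 0.
Proof. apply/matrixP=> i j; rewrite /blk /B /blkdiag3 mxE /idxT /idxI /idxR /=. rewrite ?block_mxEul ?block_mxEur ?block_mxEdl ?block_mxEdr. by rewrite ?mxE. Qed.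
Lemma bII : blk I I B = b.
Proof. apply/matrixP=> i j; rewrite /blk /B /blkdiag3 mxE /idxT /idxI /idxR /=. rewrite ?block_mxEul ?block_mxEur ?block_mxEdl ?block_mxEdr. by rewrite ?mxE. Qed.
Lemma bRI : blk Rr I B = 0.
Proof. apply/matrixP=> i j; rewrite /blk /B /blkdiag3 mxE /idxT /idxI /idxR /=. rewrite ?block_mxEul ?block_mxEur ?block_mxEdl ?block_mxEdr. by rewrite ?mxE. Qed.
Lemma bIR : blk I Rr B = 0.
Proof. apply/matrixP=> i j; rewrite /blk /B /blkdiag3 mxE /idxT /idxI /idxR /=. rewrite ?block_mxEul ?block_mxEur ?block_mxEdl ?block_mxEdr. by rewrite ?mxE. Qed.
Lemma bRR : blk Rr Rr B = d.
Proof. apply/matrixP=> i j; rewrite /blk /B /blkdiag3 mxE /idxT /idxI /idxR /=. rewrite ?block_mxEul ?block_mxEur ?block_mxEdl ?block_mxEdr. by rewrite ?mxE. Qed.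
End H.

Lemma one_blk (C : comUnitRingType) NT NI NR :
  (1%:M : 'M[C]_(NT + NI + NR)) = blkdiag3 1%:M 1%:M 1%:M.
Proof. by rewrite /blkdiag3 !scalar_mx_block. Qed.

Lemma inv_uniq (C : comUnitRingType) n (X B : 'M[C]_n) : B *m X = 1%:M -> invmx X = B.
Proof.
move=> h; have [_ uX] := mulmx1_unit h.
by rewrite -[RHS](mulmxK uX) h mul1mx.
Qed.

Lemma schur_unit (C : comUnitRingType) n1 n2 (a : 'M[C]_n1) b c (d : 'M[C]_n2) :
  block_mx a b c d \in unitmx -> d \in unitmx -> a - b *m invmx d *m c \in unitmx.
Proof.
move=> uD ud; have h := mulmxV uD.
rewrite -[invmx _]submxK mulmx_block scalar_mx_block in h.
have [h1 _ h3 _] := eq_block_mx h.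
set W11 := ulsubmx _ in h1 h3; set W21 := dlsubmx _ in h1 h3.
have e21 : W21 = - (invmx d *m c *m W11).
  rewrite -[W21](mulKmx ud) -mulmxA -mulmxN; congr (_ *m _).
  by apply/eqP; rewrite -addr_eq0 addrC h3.
have : (a - b *m invmx d *m c) *m W11 = 1%:M.
  by rewrite mulmxBl -h1 e21 mulmxN !mulmxA.
by case/mulmx1_unit.
Qed.

Local Open Scope complex_scope.

Theorem mainTheorem4 (R : realType) (NT NI NR : nat)
  (Z : 'M[R[i]]_(NT + NI + NR))
  (ZT : 'M[R[i]]_NT) (ZI : 'M[R[i]]_NI) (ZR : 'M[R[i]]_NR) :
  Z \in unitmx ->
  is_diag_mx ZT -> ZT \in unitmx ->
  is_diag_mx ZR -> ZR \in unitmx ->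
  ZI \in unitmx ->
  let Z0 := blkdiag3 ZT ZI ZR in
  let Y := invmx Z in
  let YI := invmx ZI in
  let YR := invmx ZR in
  let T := @idxT NT NI NR in
  let I := @idxI NT NI NR in
  let Rr := @idxR NT NI NR in
  (1%:M + Z0 *m invmx Z) \in unitmx ->
  (YR + blk Rr Rr Y) \in unitmx ->
  block_mx (YI + blk I I Y) (blk I Rr Y) (blk Rr I Y) (YR + blk Rr Rr Y) \in unitmx ->
  let Zt := invmx (1%:M + Z0 *m invmx Z) in
  let S := invmx (YR + blk Rr Rr Y) in
  let M := YI + blk I I Y - blk I Rr Y *m S *m blk Rr I Y in
  [/\ blk T T Zt \in unitmx,
      M \in unitmx &
      blk Rr T Zt *m invmx (blk T T Zt) =
        S *m (- blk Rr T Y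
              + blk Rr I Y *m invmx M *m (blk I T Y - blk I Rr Y *m S *m blk Rr T Y))].
Proof.
move=> uZ _ uZT _ uZR uZI Z0 Y YI YR T I Rr uB uS uD Zt S M.
have uM : M \in unitmx by apply: schur_unit uD uS.
set YT := invmx ZT.
set Y0 := blkdiag3 YT YI YR.
have Z0Y0 : Z0 *m Y0 = 1%:M.
  by rewrite /Z0 /Y0 /blkdiag3 !mulmx_block !(mulmxV, mulmx0, mul0mx, addr0, add0r) // one_blk.
have Y0Z0 : Y0 *m Z0 = 1%:M.
  by rewrite /Z0 /Y0 /blkdiag3 !mulmx_block !(mulVmx, mulmx0, mul0mx, addr0, add0r) // one_blk.
set A := Y0 + Y.
have eA : 1%:M + Z0 *m invmx Z = Z0 *m A by rewrite /A mulmxDr Z0Y0.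
have uA : A \in unitmx by move: uB; rewrite eA unitmx_mul => /andP[].
set W := invmx A.
have eZt : Zt = W *m Y0.
  rewrite /Zt; apply: inv_uniq.
  by rewrite eA -mulmxA (mulmxA Y0) Y0Z0 mul1mx /W mulVmx.
have WA : A *m W = 1%:M by rewrite /W mulmxV.
have AIT : blk I T A = blk I T Y by rewrite /A blkD bIT add0r.
have AII : blk I I A = YI + blk I I Y by rewrite /A blkD bII.
have AIR : blk I Rr A = blk I Rr Y by rewrite /A blkD bIR add0r.
have ART : blk Rr T A = blk Rr T Y by rewrite /A blkD bRT add0r.
have ARI : blk Rr I A = blk Rr I Y by rewrite /A blkD bRI add0r.
have ARR : blk Rr Rr A = YR + blk Rr Rr Y by rewrite /A blkD bRR.
have eR := congr1 (blk Rr T) WA.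
have eI := congr1 (blk I T) WA.
have eT := congr1 (blk T T) WA.
rewrite blkM ART ARI ARR one_blk bRT in eR.
rewrite blkM AIT AII AIR one_blk bIT in eI.
rewrite blkM one_blk bTT in eT.
set wT := blk T T W in eR eI eT.
set wI := blk I T W in eR eI eT.
set wR := blk Rr T W in eR eI eT.
set K := blk I T Y - blk I Rr Y *m S *m blk Rr T Y.
set RHS := S *m (- blk Rr T Y + blk Rr I Y *m invmx M *m K).
have hwR : wR = - (S *m (blk Rr T Y *m wT + blk Rr I Y *m wI)).
  rewrite -[wR](mulKmx uS) -mulmxN; congr (_ *m _).
  by apply/eqP; rewrite -addr_eq0 addrC eR.
have hwI : wI = (- (invmx M *m K)) *m wT.
  rewrite -[wI](mulKmx uM) mulNmx -mulmxA -mulmxN; congr (_ *m _).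
  apply/eqP; rewrite -addr_eq0 addrC -eI hwR /M /K.
  rewrite !(mulmxDl, mulmxDr, mulmxBl, mulmxN, mulNmx, mulmxA).
  by rewrite opprD addrACA.
have hwR' : wR = RHS *m wT.
  rewrite hwR hwI /RHS.
  by rewrite !(mulmxDl, mulmxDr, mulmxN, mulNmx, mulmxA, opprD, opprK).
have uwT : wT \in unitmx.
  have : (blk T T A + blk T I A *m (- (invmx M *m K)) + blk T Rr A *m RHS) *m wT = 1%:M.
    by rewrite -eT hwI hwR' !mulmxDl !mulmxA.
  by case/mulmx1_unit.
have uYT : YT \in unitmx by rewrite unitmx_inv.
have eTT : blk T T Zt = wT *m YT.
  by rewrite eZt blkM bTT bIT bRT !mulmx0 !addr0.
have eRT : blk Rr T Zt = wR *m YT.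
  by rewrite eZt blkM bTT bIT bRT !mulmx0 !addr0.
have iv : invmx (wT *m YT) = invmx YT *m invmx wT.
  by apply: inv_uniq; rewrite mulmxA -(mulmxA _ _ wT) mulVmx // mulmx1 mulVmx.
split => //.
  by rewrite eTT unitmx_mul uwT uYT.
by rewrite eRT eTT iv mulmxA mulmxK // hwR' mulmxK.
Qed.
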